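(* For any two vertex-disjoint graphs $G$ and $H$, $f^-(G+H)=f^-(G)+f^-(H)$ and $f^+(G+H)=f^+(G)+f^+(H)$.
   Context: All graphs are finite, simple, undirected and connected. $N[v]=N(v)\cup\{v\}$ is the closed neighbourhood. A chromatic colouring of $G$ is a proper vertex colouring $c:V(G)\to\{c_1,\dots,c_{\chi(G)}\}$. With respect to $c$, a vertex $v$ yields a rainbow neighbourhood if $N[v]$ contains a vertex of each colour $c_1,\dots,c_{\chi(G)}$; $r_\chi(G)$ is the number of such vertices, and $r^-_\chi(G)$, $r^+_\chi(G)$ are its minimum and maximum over all chromatic colourings of $G$. Fading: for a set $F\subseteq V(G)$ (a fade set), the vertices of $F$ receive a transparent colour $c^\circ$ not among $c_1,\dots,c_{\chi(G)}$; after fading, $v$ yields a rainbow neighbourhood iff for every $i$ some vertex of $N[v]\setminus F$ has colour $c_i$. The fading number $f^-(G)$ is the maximum $|F|$ over chromatic colourings $c$ attaining $r_\chi=r^-_\chi(G)$ and fade sets $F$ such that, after fading $F$, the number of vertices yielding rainbow neighbourhoods is still $r^-_\chi(G)$; $f^+(G)$ is defined analogously with $r^+_\chi(G)$. The join $G_1+G_2$ of vertex-disjoint graphs is $G_1\cup G_2$ together with all edges joining a vertex of $G_1$ to a vertex of $G_2$. *)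

(* Defs.v *)
From mathcomp Require Import all_boot.
Set Implicit Arguments. Unset Strict Implicit. Unset Printing Implicit Defensive.

Section Graphs.
Variable T : finType.
Variable e : rel T.

Definition simple_graph : Prop := symmetric e /\ irreflexive e.
Definition connected_graph : Prop := (0 < #|T|) /\ forall x y : T, connect e x y.

Definition closed_nbh (v : T) : {set T} := [set u | (u == v) || e v u].

Definition proper_col (k : nat) (c : T -> 'I_k) : bool :=
  [forall x, forall y, e x y ==> (c x != c y)].

Definition colourable (k : nat) : bool :=
  [exists c : {ffun T -> 'I_k}, proper_col c].

Definition chi : nat := find colourable (iota 0 #|T|.+1).

Definition chromatic_col (c : {ffun T -> 'I_chi}) : bool := proper_col c.

(* v yields a rainbow neighbourhood w.r.t. c after fading F
   (F = set0 : no fading) *)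
Definition rainbow (c : {ffun T -> 'I_chi}) (F : {set T}) (v : T) : bool :=
  [forall i : 'I_chi, exists u, (u \in closed_nbh v :\: F) && (c u == i)].

Definition r_fade (c : {ffun T -> 'I_chi}) (F : {set T}) : nat :=
  #|[set v | rainbow c F v]|.

Definition r_chi (c : {ffun T -> 'I_chi}) : nat := r_fade c set0.

Definition r_minus : nat :=
  \big[minn/#|T|]_(c : {ffun T -> 'I_chi} | chromatic_col c) r_chi c.

Definition r_plus : nat :=
  \max_(c : {ffun T -> 'I_chi} | chromatic_col c) r_chi c.

Definition f_minus : nat :=
  \max_(c : {ffun T -> 'I_chi} | chromatic_col c && (r_chi c == r_minus))
    \max_(F : {set T} | r_fade c F == r_minus) #|F|.

Definition f_plus : nat :=
  \max_(c : {ffun T -> 'I_chi} | chromatic_col c && (r_chi c == r_plus))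
    \max_(F : {set T} | r_fade c F == r_plus) #|F|.

End Graphs.

(* join of two vertex-disjoint graphs, on the disjoint union T1 + T2 *)
Definition join (T1 T2 : finType) (e1 : rel T1) (e2 : rel T2) : rel (T1 + T2) :=
  fun x y => match x, y with
             | inl a, inl b => e1 a b
             | inr a, inr b => e2 a b
             | _, _ => true
             end.

(* Main.v *)
Require Import Defs.
From mathcomp Require Import all_boot zify.
Set Implicit Arguments. Unset Strict Implicit. Unset Printing Implicit Defensive.
Lemma bigmin_le (I : finType) (P : pred I) (F : I -> nat) n j :
  P j -> \big[minn/n]_(i | P i) F i <= F j.
Proof.
move=> Pj; have : j \in index_enum I by rewrite mem_index_enum.
elim: (index_enum I) => [|a s IH] //=.
rewrite big_cons inE; case/orP => [/eqP <-|Hj]; first by rewrite Pj geq_minl.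
by case: (P a); [rewrite geq_min IH ?orbT | exact: IH].
Qed.

Lemma bigmin_att (I : finType) (P : pred I) (F : I -> nat) n :
  (\big[minn/n]_(i | P i) F i = n) \/ exists2 i, P i & F i = \big[minn/n]_(i | P i) F i.
Proof.
apply: (big_rec (fun x => (x = n) \/ exists2 i, P i & F i = x)); first by left.
move=> i x Pi IH; case: (leqP (F i) x) => H.
  by right; exists i => //; rewrite (minn_idPl H).
exact: IH.
Qed.

Lemma bigmax_ex (I : finType) (F : I -> nat) (P : pred I) j :
  P j -> exists2 i, P i & F i = \max_(i | P i) F i.
Proof.
move=> Pj.
have : (\max_(i | P i) F i = 0) \/ exists2 i, P i & F i = \max_(i | P i) F i.
  apply: (big_rec (fun x => (x = 0) \/ exists2 i, P i & F i = x)); first by left.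
  move=> i x Pi IH; case: (leqP (F i) x) => H.
    exact: IH.
  by right; exists i.
case=> // H0; exists j => //; rewrite H0.
by apply/eqP; rewrite -leqn0 -H0; apply: (@leq_bigmax_cond _ P F j).
Qed.

Section G.
Variable T : finType.
Variable e : rel T.
Hypothesis Hsym : symmetric e.
Hypothesis Hirr : irreflexive e.
Variable x0 : T.

Lemma colourable_card : colourable e #|T|.
Proof.
apply/existsP; exists [ffun x => enum_rank x].
apply/forallP=> x; apply/forallP=> y; apply/implyP=> Hxy.
rewrite !ffunE; apply/negP=> /eqP /enum_rank_inj Exy.
by rewrite Exy Hirr in Hxy.
Qed.

Lemma chi_col : colourable e (chi e).
Proof.
rewrite /chi.
have Hh : has (colourable e) (iota 0 #|T|.+1).
  apply/hasP; exists #|T|; last exact: colourable_card.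
  rewrite mem_iota /=. done.
have := nth_find 0 Hh.
have Hf := Hh; rewrite has_find size_iota in Hf.
by rewrite nth_iota // add0n.
Qed.

Lemma chi_min k : colourable e k -> chi e <= k.
Proof.
move=> Hk; rewrite leqNgt; apply/negP=> Hlt.
have Hs : k < size (iota 0 #|T|.+1).
  apply: leq_trans Hlt _; exact: find_size.
have := before_find 0 Hlt.
by rewrite nth_iota ?Hk //; rewrite size_iota in Hs.
Qed.

Lemma relabel (C : finType) (g : T -> C) n :
  #|[set g x | x in T]| = n ->
  exists (h : 'I_n -> C) (d : T -> 'I_n),
    [/\ injective h, forall x, h (d x) = g x & h @: setT = [set g x | x in T]].
Proof.
set S := [set g x | x in T] => HS.
have Hx0 : g x0 \in S by apply: imset_f.
have Hn : 0 < n by rewrite -HS; apply/card_gt0P; exists (g x0).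
pose s := enum S.
have Hsz : size s = n by rewrite -HS cardE.
pose h := fun i : 'I_n => nth (g x0) s i.
have Hidx : forall x, index (g x) s < n.
  by move=> x; rewrite -Hsz index_mem mem_enum; apply: imset_f.
pose d := fun x => Ordinal (Hidx x).
have Hhd : forall x, h (d x) = g x.
  by move=> x; rewrite /h /= nth_index // mem_enum; apply: imset_f.
exists h, d; split => //.
- move=> i j /eqP; rewrite /h nth_uniq ?Hsz ?enum_uniq //.
  by move/eqP/val_inj.
- apply/setP=> y; apply/imsetP/idP.
  + by case=> i _ ->; rewrite -mem_enum; apply: mem_nth; rewrite Hsz.
  + move=> /imsetP [x _ ->]; by exists (d x); rewrite ?Hhd.
Qed.

Lemma colourable_image k (c : T -> 'I_k) :
  (forall x y, e x y -> c x != c y) -> colourable e #|[set c x | x in T]|.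
Proof.
move=> Hc.
have [h [d [Hinj Hhd _]]] := @relabel _ c _ (erefl _).
apply/existsP; exists [ffun x => d x].
apply/forallP=> x; apply/forallP=> y; apply/implyP=> Hxy.
rewrite !ffunE; apply/negP=> /eqP Ed.
by move: (Hc _ _ Hxy); rewrite -!Hhd Ed eqxx.
Qed.

Lemma chrom_surj (c : {ffun T -> 'I_(chi e)}) :
  chromatic_col c -> [set c x | x in T] = setT.
Proof.
move=> Hc.
have Hp : forall x y, e x y -> c x != c y.
  by move=> x y Hxy; move/forallP: Hc => /(_ x) /forallP /(_ y) /implyP; apply.
have := chi_min (colourable_image Hp).
move=> Hle; apply/eqP; rewrite eqEcard subsetT /=.
by rewrite cardsT card_ord.
Qed.

Lemma in_nbh u v : (u \in closed_nbh e v) = (u == v) || e v u.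
Proof. by rewrite inE. Qed.

Lemma recolour n (c : T -> 'I_n) : (forall x y, e x y -> c x != c y) ->
  (forall v, ~~ [forall i, exists u, (u \in closed_nbh e v) && (c u == i)]) ->
  colourable e n.-1.
Proof.
case: n c => [|m] c Hc Hnr; first by case: (c x0).
pose cond v (j : 'I_m) := if c v < m then val j == c v
   else [forall u, (u \in closed_nbh e v) ==> (c u != widen_ord (leqnSn m) j)].
have Hex : forall v, exists j, cond v j.
  move=> v; rewrite /cond; case: ltnP => Hv.
    by exists (Ordinal Hv).
  move: (Hnr v); rewrite negb_forall => /existsP [i]; rewrite negb_exists => /forallP Hi.
  have Hiv : i != c v by move: (Hi v); rewrite in_nbh eqxx /= eq_sym.
  have Hcv : val (c v) = m by apply/eqP; rewrite eqn_leq Hv -ltnS ltn_ord.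
  have Him : i < m.
    rewrite ltn_neqAle -ltnS ltn_ord andbT; apply/negP=> /eqP Eim.
    by move: Hiv; rewrite -(inj_eq val_inj) Hcv /= Eim eqxx.
  exists (Ordinal Him); apply/forallP=> u; apply/implyP=> Hu.
  move: (Hi u); rewrite Hu /= => Hui.
  by have -> : widen_ord (leqnSn m) (Ordinal Him) = i by apply: val_inj.
have [d Hd] := fin_all_exists Hex.
apply/existsP; exists [ffun x => d x].
apply/forallP=> x; apply/forallP=> y; apply/implyP=> Hxy.
rewrite !ffunE /=.
have Hcxy := Hc _ _ Hxy.
move: (Hd x) (Hd y); rewrite /cond.
have Hlt : forall z, ~~ (c z < m) -> val (c z) = m.
  by move=> z; rewrite -leqNgt => Hz; apply/eqP; rewrite eqn_leq Hz -ltnS ltn_ord.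
case: (ltnP (c x) m) => Hx; case: (ltnP (c y) m) => Hy.
- move=> /eqP Ex /eqP Ey; apply: contra Hcxy => /eqP Exy.
  by apply/eqP/val_inj => /=; rewrite -Ex -Ey Exy.
- move=> /eqP Ex /forallP /(_ x) /implyP Hy'.
  have : x \in closed_nbh e y by rewrite in_nbh Hsym Hxy orbT.
  move/Hy'; apply: contra => /eqP Exy; apply/eqP/val_inj => /=.
  by rewrite -Ex Exy.
- move=> /forallP /(_ y) /implyP Hx' /eqP Ey.
  have : y \in closed_nbh e x by rewrite in_nbh Hxy orbT.
  move/Hx'; apply: contra => /eqP Exy; apply/eqP/val_inj => /=.
  by rewrite -Ey Exy.
- move=> _ _; apply: contra Hcxy => _; apply/eqP/val_inj => /=.
  rewrite (Hlt x); last by rewrite -leqNgt.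
  by rewrite (Hlt y) // -leqNgt.
Qed.

Lemma chrom_proper (c : {ffun T -> 'I_(chi e)}) :
  chromatic_col c -> forall x y, e x y -> c x != c y.
Proof. by move=> Hc x y Hxy; move/forallP: Hc => /(_ x) /forallP /(_ y) /implyP; apply. Qed.

Lemma rchi_pos (c : {ffun T -> 'I_(chi e)}) : chromatic_col c -> 0 < r_chi c.
Proof.
move=> Hc; rewrite lt0n; apply/negP=> /eqP H0.
have Hnr : forall v, ~~ [forall i, exists u, (u \in closed_nbh e v) && (c u == i)].
  move=> v; apply/negP=> Hv.
  have Hin : v \in [set v | rainbow c set0 v] by rewrite inE /rainbow setD0.
  have : 0 < #|[set v | rainbow c set0 v]| by apply/card_gt0P; exists v.
  by move: H0; rewrite /r_chi /r_fade => ->.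
have H1 := chi_min (recolour (chrom_proper Hc) Hnr).
have H2 : 0 < chi e := leq_ltn_trans (leq0n _) (ltn_ord (c x0)).
by rewrite -ltn_predL ltnNge H1 in H2.
Qed.


Definition cov (c : {ffun T -> 'I_(chi e)}) (F : {set T}) : bool :=
  [forall i, exists u, (u \notin F) && (c u == i)].

Definition fgen (p : nat) : nat :=
  \max_(c : {ffun T -> 'I_(chi e)} | chromatic_col c && (r_chi c == p))
    \max_(F : {set T} | r_fade c F == p) #|F|.

Lemma rf_le (c : {ffun T -> 'I_(chi e)}) F : r_fade c F <= r_chi c.
Proof.
apply: subset_leq_card; apply/subsetP=> v; rewrite !inE /rainbow.
move=> /forallP H; apply/forallP=> i; have /existsP [u /andP [Hu Hc]] := H i.
by apply/existsP; exists u; rewrite Hc andbT setD0; move: Hu; rewrite inE => /andP [].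
Qed.

Lemma cov_of_rf (c : {ffun T -> 'I_(chi e)}) F : 0 < r_fade c F -> cov c F.
Proof.
move=> /card_gt0P [v]; rewrite inE => /forallP H; apply/forallP=> i.
have /existsP [u /andP [Hu Hc]] := H i.
by apply/existsP; exists u; rewrite Hc andbT; move: Hu; rewrite inE => /andP [].
Qed.

Lemma fgen_ub (c : {ffun T -> 'I_(chi e)}) F p :
  chromatic_col c -> r_chi c = p -> r_fade c F = p -> #|F| <= fgen p.
Proof.
move=> Hc Hr Hf; rewrite /fgen.
have H1 : #|F| <= \max_(F | r_fade c F == p) #|F|.
  by apply: (@leq_bigmax_cond _ (fun F0 : {set T} => r_fade c F0 == p) (fun F0 : {set T} => #|F0|) F); rewrite /= Hf.
apply: leq_trans H1 _.
apply: (leq_bigmax_cond (F := fun c => \max_(F | r_fade c F == p) #|F|)).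
by rewrite Hc Hr eqxx.
Qed.

Lemma fgen_att p : (exists2 c : {ffun T -> 'I_(chi e)}, chromatic_col c & r_chi c = p) ->
  exists c : {ffun T -> 'I_(chi e)}, exists F,
    [/\ chromatic_col c, r_chi c = p, r_fade c F = p & #|F| = fgen p].
Proof.
case=> c0 Hc0 Hr0; rewrite /fgen.
have [c /andP [Hc /eqP Hr] <-] := bigmax_ex
   (fun c : {ffun T -> 'I_(chi e)} => \max_(F | r_fade c F == p) #|F|)
   (P := fun c : {ffun T -> 'I_(chi e)} => chromatic_col c && (r_chi c == p)) (j := c0)
   (introT andP (conj Hc0 (introT eqP Hr0))).
have [F /eqP HF <-] := bigmax_ex (fun F : {set T} => #|F|)
   (P := fun F : {set T} => r_fade c F == p) (j := set0) (introT eqP Hr).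
by exists c, F.
Qed.

Lemma chrom_ex : exists c : {ffun T -> 'I_(chi e)}, chromatic_col c.
Proof. by have /existsP [c Hc] := chi_col; exists c. Qed.

Lemma rmin_spec : (exists2 c : {ffun T -> 'I_(chi e)}, chromatic_col c & r_chi c = r_minus e)
  /\ (forall c : {ffun T -> 'I_(chi e)}, chromatic_col c -> r_minus e <= r_chi c).
Proof.
have Hle : forall c : {ffun T -> 'I_(chi e)}, chromatic_col c -> r_minus e <= r_chi c.
  by move=> c Hc; rewrite /r_minus; apply: (@bigmin_le _ (@chromatic_col T e) (@r_chi T e)).
split => //.
have [H|[c Hc Hr]] := bigmin_att (@chromatic_col T e) (@r_chi T e) #|T|; last by exists c.
have [c Hc] := chrom_ex; exists c => //; apply/eqP; rewrite eqn_leq Hle // andbT.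
rewrite /r_minus H; exact: max_card.
Qed.

Lemma rplus_spec : (exists2 c : {ffun T -> 'I_(chi e)}, chromatic_col c & r_chi c = r_plus e)
  /\ (forall c : {ffun T -> 'I_(chi e)}, chromatic_col c -> r_chi c <= r_plus e).
Proof.
split.
  have [c0 Hc0] := chrom_ex.
  have [c Hc Hr] := bigmax_ex (@r_chi T e) (P := @chromatic_col T e) Hc0.
  by exists c.
by move=> c Hc; rewrite /r_plus; apply: (@leq_bigmax_cond _ (@chromatic_col T e) (@r_chi T e)).
Qed.

End G.

Definition rbP (T C : finType) (P : pred T) (d : T -> C) (S : {set C}) : bool :=
  [forall j in S, exists u, P u && (d u == j)].

Lemma rbP_ext (T C : finType) (P Q : pred T) (d d' : T -> C) (S : {set C}) :
  P =1 Q -> d =1 d' -> rbP P d S = rbP Q d' S.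
Proof.
move=> HP Hd; apply: eq_forallb => j; congr (_ ==> _); apply: eq_existsb => u.
by rewrite HP Hd.
Qed.

Lemma rbP_relabel (T C : finType) k (h : 'I_k -> C) (P : pred T) (d : T -> 'I_k) :
  injective h -> rbP P (fun x => h (d x)) (h @: setT) = rbP P d setT.
Proof.
move=> Hh; apply/forallP/forallP.
- move=> H i; apply/implyP=> _.
  have /implyP := H (h i); rewrite imset_f ?in_setT // => /(_ isT) /existsP [u /andP [Pu Hu]].
  by apply/existsP; exists u; rewrite Pu -(inj_eq Hh).
- move=> H j; apply/implyP=> /imsetP [i _ ->].
  have /implyP := H i; rewrite in_setT => /(_ isT) /existsP [u /andP [Pu Hu]].
  by apply/existsP; exists u; rewrite Pu (inj_eq Hh).
Qed.

Lemma rbP_join (T1 T2 C : finType) (P : pred (T1 + T2)) (c : T1 + T2 -> C) (S1 S2 : {set C}) :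
  (forall b, c (inr b) \notin S1) -> (forall a, c (inl a) \notin S2) ->
  rbP P c (S1 :|: S2) =
  rbP (fun a => P (inl a)) (fun a => c (inl a)) S1 &&
  rbP (fun b => P (inr b)) (fun b => c (inr b)) S2.
Proof.
move=> H1 H2; apply/idP/andP.
- move=> H; split; apply/forallP=> j; apply/implyP=> Hj;
    (have /implyP := forallP H j; rewrite inE Hj ?orbT => /(_ isT) /existsP [[a|b] /andP [Pu /eqP Cu]]).
  + by apply/existsP; exists a; rewrite Pu Cu eqxx.
  + by move: (H1 b); rewrite Cu Hj.
  + by move: (H2 a); rewrite Cu Hj.
  + by apply/existsP; exists b; rewrite Pu Cu eqxx.
- case=> Ha Hb; apply/forallP=> j; apply/implyP; rewrite inE => /orP [] Hj.
  + have /implyP := forallP Ha j; rewrite Hj => /(_ isT) /existsP [a /andP [Pu Cu]].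
    by apply/existsP; exists (inl a); rewrite Pu.
  + have /implyP := forallP Hb j; rewrite Hj => /(_ isT) /existsP [b /andP [Pu Cu]].
    by apply/existsP; exists (inr b); rewrite Pu.
Qed.

Lemma rainbow_rbP (T : finType) (e : rel T) (c : {ffun T -> 'I_(chi e)}) F v :
  rainbow c F v = rbP (fun u => u \in closed_nbh e v :\: F) c setT.
Proof. by apply: eq_forallb => i; rewrite in_setT. Qed.

Lemma cov_rbP (T : finType) (e : rel T) (c : {ffun T -> 'I_(chi e)}) F :
  cov c F = rbP (fun u => u \notin F) c setT.
Proof. by apply: eq_forallb => i; rewrite in_setT. Qed.

Lemma card_sum_set (T1 T2 : finType) (A : {set T1 + T2}) :
  #|A| = #|[set a | inl a \in A]| + #|[set b | inr b \in A]|.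
Proof.
rewrite -!sum1_card big_sumType; congr (_ + _); apply: eq_bigl => x; by rewrite inE.
Qed.

Definition lpre (T1 T2 : finType) (F : {set T1 + T2}) : {set T1} := [set a | inl a \in F].
Definition rpre (T1 T2 : finType) (F : {set T1 + T2}) : {set T2} := [set b | inr b \in F].

Section J.
Variables (T1 T2 : finType) (e1 : rel T1) (e2 : rel T2).

Lemma join_rfade (c : {ffun (T1 + T2) -> 'I_(chi (join e1 e2))})
  (c1 : {ffun T1 -> 'I_(chi e1)}) (c2 : {ffun T2 -> 'I_(chi e2)})
  (h1 : 'I_(chi e1) -> 'I_(chi (join e1 e2))) (h2 : 'I_(chi e2) -> 'I_(chi (join e1 e2))) :
  injective h1 -> injective h2 -> (forall i j, h1 i != h2 j) ->
  h1 @: setT :|: h2 @: setT = setT ->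
  (forall a, c (inl a) = h1 (c1 a)) -> (forall b, c (inr b) = h2 (c2 b)) ->
  forall F, r_fade c F =
    (if cov c2 (rpre F) then r_fade c1 (lpre F) else 0) +
    (if cov c1 (lpre F) then r_fade c2 (rpre F) else 0).
Proof.
move=> Hi1 Hi2 Hd HU Hc1 Hc2 F.
have D1 : forall b, c (inr b) \notin h1 @: setT.
  by move=> b; rewrite Hc2; apply/imsetP => [[i _ E]]; move: (Hd i (c2 b)); rewrite E eqxx.
have D2 : forall a, c (inl a) \notin h2 @: setT.
  by move=> a; rewrite Hc1; apply/imsetP => [[i _ E]]; move: (Hd (c1 a) i); rewrite E eqxx.
have Rl : forall a, rainbow c F (inl a) = rainbow c1 (lpre F) a && cov c2 (rpre F).
  move=> a; rewrite rainbow_rbP -HU rbP_join //.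
  have HP1 : (fun a' => inl a' \in closed_nbh (join e1 e2) (inl a) :\: F) =1
             (fun a' => a' \in closed_nbh e1 a :\: lpre F) by move=> a'; rewrite !inE.
  have HP2 : (fun b => inr b \in closed_nbh (join e1 e2) (inl a) :\: F) =1
             (fun b => b \notin rpre F) by move=> b; rewrite !inE /= andbT.
  by rewrite (rbP_ext _ HP1 Hc1) rbP_relabel // (rbP_ext _ HP2 Hc2) rbP_relabel // -rainbow_rbP -cov_rbP.
have Rr : forall b, rainbow c F (inr b) = cov c1 (lpre F) && rainbow c2 (rpre F) b.
  move=> b; rewrite rainbow_rbP -HU rbP_join //.
  have HP1 : (fun a => inl a \in closed_nbh (join e1 e2) (inr b) :\: F) =1
             (fun a => a \notin lpre F) by move=> a; rewrite !inE /= andbT.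
  have HP2 : (fun b' => inr b' \in closed_nbh (join e1 e2) (inr b) :\: F) =1
             (fun b' => b' \in closed_nbh e2 b :\: rpre F) by move=> b'; rewrite !inE.
  by rewrite (rbP_ext _ HP1 Hc1) rbP_relabel // (rbP_ext _ HP2 Hc2) rbP_relabel // -rainbow_rbP -cov_rbP.
rewrite /r_fade card_sum_set; congr (_ + _).
  have -> : [set a | inl a \in [set v | rainbow c F v]] =
     if cov c2 (rpre F) then [set a | rainbow c1 (lpre F) a] else set0.
    by apply/setP => a; rewrite !inE Rl; case: (cov c2 (rpre F)); rewrite ?inE ?andbT ?andbF.
  by case: (cov c2 (rpre F)); rewrite ?cards0.
have -> : [set b | inr b \in [set v | rainbow c F v]] =
   if cov c1 (lpre F) then [set b | rainbow c2 (rpre F) b] else set0.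
  by apply/setP => b; rewrite !inE Rr; case: (cov c1 (lpre F)); rewrite ?inE.
by case: (cov c1 (lpre F)); rewrite ?cards0.
Qed.

End J.

Lemma lr_neq m n (i : 'I_m) (j : 'I_n) : lshift n i != rshift m j.
Proof.
rewrite -(inj_eq val_inj) /=; apply/negP=> /eqP E.
by have := ltn_ord i; rewrite E ltnNge leq_addr.
Qed.

Section J2.
Variables (T1 T2 : finType) (e1 : rel T1) (e2 : rel T2).
Hypotheses (Hs1 : symmetric e1) (Hi1 : irreflexive e1) (Hs2 : symmetric e2) (Hi2 : irreflexive e2).
Variables (a0 : T1) (b0 : T2).

Let J := join e1 e2.

Lemma join_sym : symmetric J.
Proof. by case=> [a|b] [a'|b'] //=; rewrite ?Hs1 ?Hs2. Qed.

Lemma join_irr : irreflexive J.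
Proof. by case=> [a|b] /=; rewrite ?Hi1 ?Hi2. Qed.

Lemma join_counts k (c : T1 + T2 -> 'I_k) : (forall x y, J x y -> c x != c y) ->
  let S1 := [set c (inl a) | a in T1] in let S2 := [set c (inr b) | b in T2] in
  [/\ chi e1 <= #|S1|, chi e2 <= #|S2|, #|S1 :|: S2| = #|S1| + #|S2| & #|S1 :|: S2| <= k].
Proof.
move=> Hc S1 S2; split.
- apply: chi_min; apply: (colourable_image a0 (c := fun a => c (inl a))).
  by move=> x y Hxy; apply: Hc.
- apply: chi_min; apply: (colourable_image b0 (c := fun b => c (inr b))).
  by move=> x y Hxy; apply: Hc.
- rewrite cardsU.
  have -> : S1 :&: S2 = set0.
    apply/setP=> j; rewrite !inE; apply/negP=> /andP [/imsetP [a _ ->] /imsetP [b _ E]].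
    by move: (Hc (inl a) (inr b) isT); rewrite E eqxx.
  by rewrite cards0 subn0.
- by apply: leq_trans (max_card _) _; rewrite card_ord.
Qed.

Lemma chi_join : chi J = chi e1 + chi e2.
Proof.
apply/eqP; rewrite eqn_leq; apply/andP; split.
  apply: chi_min.
  have [c1 Hc1] := chrom_ex Hi1; have [c2 Hc2] := chrom_ex Hi2.
  apply/existsP; exists [ffun x => match x with inl a => lshift (chi e2) (c1 a)
                                           | inr b => rshift (chi e1) (c2 b) end].
  apply/forallP=> x; apply/forallP=> y; apply/implyP; rewrite !ffunE.
  case: x => [a|b]; case: y => [a'|b'] /= Hxy.
  - by rewrite (inj_eq (@lshift_inj _ _)); apply: chrom_proper Hc1 _ _ Hxy.
  - exact: lr_neq.
  - by rewrite eq_sym lr_neq.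
  - by rewrite (inj_eq (@rshift_inj _ _)); apply: chrom_proper Hc2 _ _ Hxy.
have [c Hc] := chrom_ex join_irr.
have [H1 H2 H3 H4] := join_counts (chrom_proper Hc).
lia.
Qed.

Definition formula (c1 : {ffun T1 -> 'I_(chi e1)}) (c2 : {ffun T2 -> 'I_(chi e2)}) (F : {set T1 + T2}) :=
    (if cov c2 (rpre F) then r_fade c1 (lpre F) else 0) +
    (if cov c1 (lpre F) then r_fade c2 (rpre F) else 0).

Lemma decomp (c : {ffun (T1 + T2) -> 'I_(chi J)}) : chromatic_col c ->
  exists c1 : {ffun T1 -> 'I_(chi e1)}, exists c2 : {ffun T2 -> 'I_(chi e2)},
  [/\ chromatic_col c1, chromatic_col c2 & forall F, r_fade c F = formula c1 c2 F].
Proof.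
move=> Hc.
have Hp := chrom_proper Hc.
have [H1 H2 H3 H4] := join_counts Hp.
set S1 := [set c (inl a) | a in T1] in H1 H3 H4.
set S2 := [set c (inr b) | b in T2] in H2 H3 H4.
have HJ := chi_join.
have E1 : #|S1| = chi e1 by lia.
have E2 : #|S2| = chi e2 by lia.
have HU : S1 :|: S2 = setT.
  apply/eqP; rewrite eqEcard subsetT cardsT card_ord /=.
  by rewrite H3 E1 E2 HJ.
have [h1 [d1 [Hh1 Hd1 Im1]]] := relabel a0 E1.
have [h2 [d2 [Hh2 Hd2 Im2]]] := relabel b0 E2.
exists [ffun a => d1 a], [ffun b => d2 b]; split.
- apply/forallP=> x; apply/forallP=> y; apply/implyP=> Hxy; rewrite !ffunE.
  apply: contra (Hp (inl x) (inl y) Hxy) => /eqP E.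
  by rewrite -Hd1 E Hd1.
- apply/forallP=> x; apply/forallP=> y; apply/implyP=> Hxy; rewrite !ffunE.
  apply: contra (Hp (inr x) (inr y) Hxy) => /eqP E.
  by rewrite -Hd2 E Hd2.
- apply: (join_rfade Hh1 Hh2).
  + move=> i j; apply/negP=> /eqP E.
    have /imsetP [a _ Ea] : h1 i \in S1 by rewrite /S1 -Im1 imset_f.
    have /imsetP [b _ Eb] : h2 j \in S2 by rewrite /S2 -Im2 imset_f.
    move: (Hp (inl a) (inr b) isT).
    by rewrite -Ea -Eb E eqxx.
  + by rewrite Im1 Im2 -/S1 -/S2 HU.
  + by move=> a; rewrite ffunE Hd1.
  + by move=> b; rewrite ffunE Hd2.
Qed.

Lemma construct (c1 : {ffun T1 -> 'I_(chi e1)}) (c2 : {ffun T2 -> 'I_(chi e2)}) :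
  chromatic_col c1 -> chromatic_col c2 ->
  exists c : {ffun (T1 + T2) -> 'I_(chi J)},
  chromatic_col c /\ forall F, r_fade c F = formula c1 c2 F.
Proof.
move=> Hc1 Hc2.
pose E := esym chi_join.
pose h1 := fun i : 'I_(chi e1) => cast_ord E (lshift (chi e2) i).
pose h2 := fun j : 'I_(chi e2) => cast_ord E (rshift (chi e1) j).
have Hh1 : injective h1 by move=> i i' /cast_ord_inj /lshift_inj.
have Hh2 : injective h2 by move=> i i' /cast_ord_inj /rshift_inj.
have Hd : forall i j, h1 i != h2 j.
  by move=> i j; rewrite /h1 /h2 (inj_eq (@cast_ord_inj _ _ _)) lr_neq.
exists [ffun x => match x with inl a => h1 (c1 a) | inr b => h2 (c2 b) end]; split.
  apply/forallP=> x; apply/forallP=> y; apply/implyP; rewrite !ffunE.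
  case: x => [a|b]; case: y => [a'|b'] /= Hxy.
  - by rewrite (inj_eq Hh1); apply: chrom_proper Hc1 _ _ Hxy.
  - exact: Hd.
  - by rewrite eq_sym Hd.
  - by rewrite (inj_eq Hh2); apply: chrom_proper Hc2 _ _ Hxy.
apply: (join_rfade Hh1 Hh2 Hd).
- apply/setP=> k; rewrite !inE; case: (splitP (cast_ord (esym E) k)) => [i Hi|j Hj].
  + apply/orP; left; apply/imsetP; exists i => //; apply: val_inj; by rewrite /= -Hi.
  + apply/orP; right; apply/imsetP; exists j => //; apply: val_inj; by rewrite /= -Hj.
- by move=> a; rewrite ffunE.
- by move=> b; rewrite ffunE.
Qed.

Lemma lpre0 : lpre (set0 : {set T1 + T2}) = set0.
Proof. by apply/setP=> a; rewrite !inE. Qed.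
Lemma rpre0 : rpre (set0 : {set T1 + T2}) = set0.
Proof. by apply/setP=> a; rewrite !inE. Qed.

Lemma rchi_formula (c : {ffun (T1 + T2) -> 'I_(chi J)}) c1 c2 :
  chromatic_col c1 -> chromatic_col c2 -> (forall F, r_fade c F = formula c1 c2 F) ->
  r_chi c = r_chi c1 + r_chi c2.
Proof.
move=> Hc1 Hc2 Hf; rewrite /r_chi Hf /formula lpre0 rpre0.
by rewrite (cov_of_rf (rchi_pos Hs1 a0 Hc1)) (cov_of_rf (rchi_pos Hs2 b0 Hc2)).
Qed.

Lemma fgen_join p1 p2 :
  (exists2 c1 : {ffun T1 -> 'I_(chi e1)}, chromatic_col c1 & r_chi c1 = p1) ->
  (exists2 c2 : {ffun T2 -> 'I_(chi e2)}, chromatic_col c2 & r_chi c2 = p2) ->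
  (forall (c1 : {ffun T1 -> 'I_(chi e1)}) (c2 : {ffun T2 -> 'I_(chi e2)}),
     chromatic_col c1 -> chromatic_col c2 ->
     r_chi c1 + r_chi c2 = p1 + p2 -> r_chi c1 = p1 /\ r_chi c2 = p2) ->
  fgen J (p1 + p2) = fgen e1 p1 + fgen e2 p2.
Proof.
move=> Ex1 Ex2 Hext.
have [c1 [F1 [Hc1 Hr1 Hf1 HF1]]] := fgen_att Ex1.
have [c2 [F2 [Hc2 Hr2 Hf2 HF2]]] := fgen_att Ex2.
have Hp1 : 0 < p1 by rewrite -Hr1; exact: (rchi_pos Hs1 a0 Hc1).
have Hp2 : 0 < p2 by rewrite -Hr2; exact: (rchi_pos Hs2 b0 Hc2).
have [c [Hc Hf]] := construct Hc1 Hc2.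
have Hrc : r_chi c = p1 + p2 by rewrite (rchi_formula Hc1 Hc2 Hf) Hr1 Hr2.
apply/eqP; rewrite eqn_leq; apply/andP; split.
- have [d [F [Hd Hrd Hfd <-]]] := fgen_att (ex_intro2 _ _ c Hc Hrc).
  have [d1 [d2 [Hd1 Hd2 Hfd']]] := decomp Hd.
  have Hrd' := rchi_formula Hd1 Hd2 Hfd'.
  have [Hr1' Hr2'] : r_chi d1 = p1 /\ r_chi d2 = p2 by apply: Hext => //; rewrite -Hrd' Hrd.
  have L1 := rf_le d1 (lpre F); have L2 := rf_le d2 (rpre F).
  rewrite Hfd' /formula in Hfd.
  rewrite card_sum_set.
  case: (cov d2 (rpre F)) Hfd; case: (cov d1 (lpre F)) => Hfd; try lia.
  have E1 : r_fade d1 (lpre F) = p1 by lia.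
  have E2 : r_fade d2 (rpre F) = p2 by lia.
  by apply: leq_add; [exact: (fgen_ub Hd1 Hr1' E1) | exact: (fgen_ub Hd2 Hr2' E2)].
- pose F : {set T1 + T2} := [set x | match x with inl a => a \in F1 | inr b => b \in F2 end].
  have EF1 : lpre F = F1 by apply/setP=> a; rewrite !inE.
  have EF2 : rpre F = F2 by apply/setP=> b; rewrite !inE.
  have HfF : r_fade c F = p1 + p2.
    rewrite Hf /formula EF1 EF2.
    rewrite (cov_of_rf (c := c2) (F := F2)) ?Hf2 //.
    by rewrite (cov_of_rf (c := c1) (F := F1)) ?Hf1 // Hf1 Hf2.
  by rewrite -HF1 -HF2 -EF1 -EF2 -card_sum_set (fgen_ub Hc Hrc HfF).
Qed.

Lemma rmin_join : r_minus J = r_minus e1 + r_minus e2.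
Proof.
have [[c1 Hc1 Hr1] L1] := rmin_spec Hi1.
have [[c2 Hc2 Hr2] L2] := rmin_spec Hi2.
have [[c Hc Hr] L] := rmin_spec join_irr.
apply/eqP; rewrite eqn_leq; apply/andP; split.
- have [d [Hd Hf]] := construct Hc1 Hc2.
  by have := L d Hd; rewrite (rchi_formula Hc1 Hc2 Hf) Hr1 Hr2.
- have [d1 [d2 [Hd1 Hd2 Hf]]] := decomp Hc.
  rewrite -Hr (rchi_formula Hd1 Hd2 Hf).
  by apply: leq_add; [apply: L1 | apply: L2].
Qed.

Lemma rplus_join : r_plus J = r_plus e1 + r_plus e2.
Proof.
have [[c1 Hc1 Hr1] L1] := rplus_spec Hi1.
have [[c2 Hc2 Hr2] L2] := rplus_spec Hi2.
have [[c Hc Hr] L] := rplus_spec join_irr.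
apply/eqP; rewrite eqn_leq; apply/andP; split.
- have [d1 [d2 [Hd1 Hd2 Hf]]] := decomp Hc.
  rewrite -Hr (rchi_formula Hd1 Hd2 Hf).
  by apply: leq_add; [apply: L1 | apply: L2].
- have [d [Hd Hf]] := construct Hc1 Hc2.
  by have := L d Hd; rewrite (rchi_formula Hc1 Hc2 Hf) Hr1 Hr2.
Qed.

Lemma fminus_join : f_minus J = f_minus e1 + f_minus e2.
Proof.
change (fgen J (r_minus J) = fgen e1 (r_minus e1) + fgen e2 (r_minus e2)).
have [[c1 Hc1 Hr1] L1] := rmin_spec Hi1.
have [[c2 Hc2 Hr2] L2] := rmin_spec Hi2.
rewrite rmin_join; apply: fgen_join; [by exists c1 | by exists c2 |].
move=> d1 d2 Hd1 Hd2 Hs; have := L1 d1 Hd1; have := L2 d2 Hd2; lia.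
Qed.

Lemma fplus_join : f_plus J = f_plus e1 + f_plus e2.
Proof.
change (fgen J (r_plus J) = fgen e1 (r_plus e1) + fgen e2 (r_plus e2)).
have [[c1 Hc1 Hr1] L1] := rplus_spec Hi1.
have [[c2 Hc2 Hr2] L2] := rplus_spec Hi2.
rewrite rplus_join; apply: fgen_join; [by exists c1 | by exists c2 |].
move=> d1 d2 Hd1 Hd2 Hs; have := L1 d1 Hd1; have := L2 d2 Hd2; lia.
Qed.

End J2.

Theorem theorem2p4 (T1 T2 : finType) (e1 : rel T1) (e2 : rel T2) :
  simple_graph e1 -> connected_graph e1 ->
  simple_graph e2 -> connected_graph e2 ->
  f_minus (join e1 e2) = f_minus e1 + f_minus e2 /\
  f_plus (join e1 e2) = f_plus e1 + f_plus e2.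
Proof.
move=> [Hs1 Hi1] [/card_gt0P [a0 _] _] [Hs2 Hi2] [/card_gt0P [b0 _] _].
split; [exact: fminus_join | exact: fplus_join].
Qed.
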